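(* Let $k$ and $s$ be integers with $1\leq s\leq k$, and let $G$ be a connected cograph on at least $k+s+2$ vertices that has no $k$-dense $(k+s+2)$-set. Then there exists a set $L$ of vertices of $G$ with $1\leq |L|\leq s$ such that every vertex of $L$ is adjacent to every vertex of $V(G)\setminus L$.
   Context: All graphs are finite and simple. For a graph $G$ and a nonnegative integer $k$, a $k$-sparse set is a set of vertices inducing a subgraph of maximum degree at most $k$; a $k$-dense $i$-set is a set of $i$ vertices of $G$ that is $k$-sparse in the complement of $G$. A cograph is a graph containing no induced path on four vertices (equivalently, the complement of every connected induced subgraph on at least two vertices is disconnected). *)

(* Defs.v *)
From mathcomp Require Import all_boot.
Set Implicit Arguments. Unset Strict Implicit. Unset Printing Implicit Defensive.

Definition simple_graph (T : finType) (e : rel T) : Prop :=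
  symmetric e /\ irreflexive e.

Definition compl_rel (T : finType) (e : rel T) : rel T :=
  fun x y => (x != y) && ~~ e x y.

Definition sparse_set (T : finType) (e : rel T) (k : nat) (S : {set T}) : Prop :=
  forall x, x \in S -> #|[set y in S | e x y]| <= k.

Definition dense_iset (T : finType) (e : rel T) (k i : nat) (S : {set T}) : Prop :=
  #|S| = i /\ sparse_set (compl_rel e) k S.

Definition connected_graph (T : finType) (e : rel T) : Prop :=
  forall x y : T, connect e x y.

Definition cograph (T : finType) (e : rel T) : Prop :=
  ~ exists a b c d : T,
      [/\ uniq [:: a; b; c; d],
          [&& e a b, e b c & e c d] &
          [&& ~~ e a c, ~~ e b d & ~~ e a d]].

(* Main.v *)
Require Import Defs.
From mathcomp Require Import all_boot zify.
Set Implicit Arguments. Unset Strict Implicit.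


Definition cutN (T : finType) (r : rel T) (S A : {set T}) :=
  forall a b, a \in A -> b \in S :\: A -> ~~ r a b.
Definition cutJ (T : finType) (r : rel T) (S A : {set T}) :=
  forall a b, a \in A -> b \in S :\: A -> r a b.
Definition Pc (T : finType) (r : rel T) (S : {set T}) :=
  exists A : {set T}, [/\ A \proper S, A != set0 & cutN r S A \/ cutJ r S A].

Lemma sub_card (T : finType) (A : {set T}) n : n <= #|A| -> exists B : {set T}, B \subset A /\ #|B| = n.
Proof.
move=> /card_geqP [s [us ss sub]]; exists [set x in s]; split.
  by apply/subsetP => x; rewrite inE; apply: sub.
by rewrite cardsE; move/card_uniqP: us ->.
Qed.

Lemma compl_sym (T : finType) (r : rel T) : symmetric r -> symmetric (compl_rel r).
Proof. by move=> sr x y; rewrite /compl_rel eq_sym sr. Qed.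

Lemma compl_cograph (T : finType) (r : rel T) : symmetric r -> cograph r -> cograph (compl_rel r).
Proof.
move=> sr cg [a [b [c [d [u /and3P [ab bc cd] /and3P [ac bd ad]]]]]].
apply: cg; exists b, d, a, c.
move: u ab bc cd ac bd ad; rewrite /compl_rel /= !inE.
move=> /and4P [/norP [nab /norP [nac nad]] /norP [nbc nbd] ncd _].
rewrite nab nac nad nbc nbd ncd /= !negbK => nrab nrbc nrcd rac rbd rad.
split.
- rewrite (eq_sym b a) (eq_sym d a) (eq_sym d c).
  by rewrite (negbTE nab) (negbTE nbc) (negbTE nbd) (negbTE nad) (negbTE ncd).
- by rewrite rbd sr rad rac.
- by rewrite (sr b a) (sr d c) nrab nrcd nrbc.
Qed.

Lemma compl_back (T : finType) (r : rel T) S : Pc (compl_rel r) S -> Pc r S.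
Proof.
move=> [A [pA nA [c|c]]]; exists A; split => //; [right|left] => a b aA bS.
  have : a != b by apply: contraTneq aA => ->; move: bS; rewrite inE => /andP [].
  by move: (c a b aA bS); rewrite /compl_rel => /nandP [/negPn ->|/negPn].
by move: (c a b aA bS); rewrite /compl_rel => /andP [].
Qed.


Lemma core (T : finType) (r : rel T) (sr : symmetric r) (cg : cograph r) (S : {set T}) v (A B : {set T}) w b0 :
  (forall x, (x \in S) = [|| x == v, x \in A | x \in B]) ->
  v \notin A -> v \notin B -> (forall x, x \in A -> x \notin B) ->
  (forall a b, a \in A -> b \in B -> ~~ r a b) ->
  w \in A -> ~~ r v w -> b0 \in B -> r v b0 -> Pc r S.
Proof.
move=> Sd vA vB dAB nAB wA nvw b0B vb0.
case: (boolP [exists a, exists w', [&& a \in A, w' \in A, r v a, ~~ r v w' & r a w']]).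
  move=> /existsP [a /existsP [w' /and5P [aA w'A va nvw' aw']]].
  exfalso; apply: cg; exists w', a, v, b0; split.
  - rewrite /= !inE !negb_or.
    have -> : w' != a by apply: contraNneq nvw' => ->.
    have -> : w' != v by apply: contraNneq vA => <-.
    have -> : w' != b0 by apply: contraTneq w'A => ->; apply/negP => /dAB; rewrite b0B.
    have -> : a != v by apply: contraNneq vA => <-.
    have -> : a != b0 by apply: contraTneq aA => ->; apply/negP => /dAB; rewrite b0B.
    have -> : v != b0 by apply: contraNneq vB => ->.
    done.
  - by rewrite sr aw' sr va vb0.
  - by rewrite sr (negbTE nvw') (nAB _ _ aA b0B) (nAB _ _ w'A b0B).
move=> /existsPn H.
exists [set x in A | ~~ r v x]; split.
- apply/properP; split.
    by apply/subsetP => x; rewrite inE Sd => /andP [-> _]; rewrite orbT.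
  by exists v; rewrite ?Sd ?eqxx // inE (negbTE vA).
- by apply/set0Pn; exists w; rewrite inE wA nvw.
- left => a b; rewrite !inE => /andP [aA nva] /andP [bX]; rewrite Sd.
  case/or3P => [/eqP -> | bA | bB].
  + by rewrite sr.
  + move: bX; rewrite bA /= negbK => vb.
    move: (H b) => /existsPn /(_ a); rewrite bA aA vb nva /= sr => /negP; by move/negP.
  + exact: nAB.
Qed.

Lemma stepA (T : finType) (r : rel T) (sr : symmetric r) (cg : cograph r) (S : {set T}) v (A B : {set T}) w :
  (forall x, (x \in S) = [|| x == v, x \in A | x \in B]) ->
  v \notin A -> v \notin B -> (forall x, x \in A -> x \notin B) ->
  (forall a b, a \in A -> b \in B -> ~~ r a b) ->
  w \in A -> ~~ r v w -> B != set0 -> Pc r S.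
Proof.
move=> Sd vA vB dAB nAB wA nvw nB.
case: (boolP [exists b0, (b0 \in B) && r v b0]).
  by move=> /existsP [b0 /andP [b0B vb0]]; exact: (core sr cg Sd vA vB dAB nAB wA nvw b0B vb0).
move=> /existsPn H; exists B; split => //.
- apply/properP; split.
    by apply/subsetP => x xB; rewrite Sd xB !orbT.
  by exists v; rewrite ?Sd ?eqxx.
- left => a b aB; rewrite inE Sd => /andP [bB] /or3P [/eqP -> | bA | ]; last by rewrite (negbTE bB).
  + by rewrite sr; move: (H a); rewrite aB.
  + by rewrite sr; apply: nAB.
Qed.

Lemma mainstep (T : finType) (r : rel T) (sr : symmetric r) (cg : cograph r) (S : {set T}) v (A : {set T}) :
  v \in S -> A \proper S :\ v -> A != set0 -> cutN r (S :\ v) A -> Pc r S.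
Proof.
move=> vS /properP [sA [b0 b0H b0A]] nA cN.
set B := (S :\ v) :\: A.
have nB : B != set0 by apply/set0Pn; exists b0; rewrite inE b0A.
have Sd : forall x, (x \in S) = [|| x == v, x \in A | x \in B].
  move=> x; rewrite !inE; case: (eqVneq x v) => [->|xv] //=.
  case xA: (x \in A) => //=; first by move: (subsetP sA x xA); rewrite !inE xv.
have vA : v \notin A by apply/negP => /(subsetP sA); rewrite !inE eqxx.
have vB : v \notin B by rewrite /B !inE eqxx /= andbF.
have dAB : forall x, x \in A -> x \notin B by move=> x xA; rewrite inE xA.
have nAB : forall a b, a \in A -> b \in B -> ~~ r a b by move=> a b aA bB; apply: cN.
case: (boolP [exists w, [&& w \in S, w != v & ~~ r v w]]).
  move=> /existsP [w /and3P [wS wv nvw]].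
  move: wS; rewrite Sd (negbTE wv) /= => /orP [wA|wB].
    exact: (stepA sr cg Sd vA vB dAB nAB wA nvw nB).
  have Sd' : forall x, (x \in S) = [|| x == v, x \in B | x \in A].
    by move=> x; rewrite Sd; case: (x \in A); case: (x \in B); rewrite ?orbT.
  apply: (stepA sr cg Sd' vB vA _ _ wB nvw nA).
    by move=> x xB; apply/negP => /dAB; rewrite xB.
  by move=> a b aB bA; rewrite sr; apply: nAB.
move=> /existsPn H; exists [set v]; split.
- apply/properP; split; first by rewrite sub1set.
  by case/set0Pn: nA => a aA; exists a; rewrite ?Sd ?aA ?orbT // inE; apply: contraNneq vA => <-.
- by apply/set0Pn; exists v; rewrite inE.
- right => a b; rewrite !inE => /eqP -> /andP [bv bS]; move: (H b).
  by rewrite bS bv /= negbK.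
Qed.

Lemma seinsche (T : finType) (r : rel T) (sr : symmetric r) (cg : cograph r) n :
  forall S : {set T}, #|S| = n.+2 -> Pc r S.
Proof.
elim: n => [|n IH] S cS.
  have /card_gt0P [v vS] : 0 < #|S| by rewrite cS.
  have : #|S :\ v| == 1 by apply/eqP; move: cS; rewrite (cardsD1 v) vS add1n => -[].
  case/cards1P => u Hu.
  have uS : u \in S :\ v by rewrite Hu set11.
  exists [set v]; split.
  - apply/properP; split; first by rewrite sub1set.
    by move: uS; rewrite !inE => /andP [uv uS']; exists u; rewrite ?inE.
  - by apply/set0Pn; exists v; rewrite inE.
  - have bu : forall b, b \in S :\: [set v] -> b = u.
      by move=> b; rewrite Hu inE => /eqP.
    case ruv: (r v u); [right|left] => a b /set1P -> /bu ->.
      by [].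
    by rewrite ruv.
have /card_gt0P [v vS] : 0 < #|S| by rewrite cS.
have : #|S :\ v| = n.+2 by move: cS; rewrite (cardsD1 v) vS add1n => -[].
move=> /IH [A [pA nA [c|c]]].
  exact: (mainstep sr cg vS pA nA c).
apply: compl_back.
apply: (mainstep (compl_sym sr) (compl_cograph sr cg) vS pA nA).
by move=> a b aA bH; rewrite /compl_rel negb_and negbK (c a b aA bH) orbT.
Qed.
Theorem lemma7p1 (T : finType) (e : rel T) (k s : nat) :
  simple_graph e ->
  1 <= s <= k ->
  connected_graph e ->
  cograph e ->
  k + s + 2 <= #|T| ->
  ~ (exists S : {set T}, dense_iset e k (k + s + 2) S) ->
  exists L : {set T},
    1 <= #|L| <= s /\
    (forall x y, x \in L -> y \in ~: L -> e x y).
Proof.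
move=> [sr irr] /andP [s1 sk] conn cg card noS.
have hT : #|[set: T]| = (#|T| - 2).+2 by rewrite cardsT -addn2 subnK //; lia.
have [A [pA nA [c|c]]] := seinsche sr cg hT.
  exfalso.
  case/set0Pn: nA => x xA; case/properP: pA => _ [y _ yA].
  have cl : closed e A.
    move=> a b eab; case aA: (a \in A); case bA: (b \in A) => //.
      by move: (c a b aA); rewrite !inE bA => /(_ isT); rewrite eab.
    by move: (c b a bA); rewrite !inE aA sr => /(_ isT); rewrite eab.
  have := closed_connect cl (conn x y).
  by rewrite xA (negbTE yA).
set R := compl_rel e.
have hsR : symmetric R by apply: compl_sym.
have csR := sym_connect_sym hsR.
pose C x := [set y | connect R x y].
have F3 : forall x z y, z \in C x -> R z y -> y \in C x.
  move=> x z y; rewrite !inE => xz zy; apply: connect_trans xz _; exact: connect1.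
have F1 : forall x z y, z \in C x -> y \notin C x -> e z y.
  move=> x z y zC yC; case ezy: (e z y) => //.
  have zy : z != y by apply: contraNneq yC => <-.
  by move: yC; rewrite (F3 x z y zC) //; rewrite /R /compl_rel zy ezy.
have F2 : forall x, exists y, y \notin C x.
  move=> x.
  have cl : closed R A.
    move=> a b; rewrite /R /compl_rel => /andP [_ neab].
    case aA: (a \in A); case bA: (b \in A) => //.
      by move: (c a b aA); rewrite !inE bA => /(_ isT) eab; rewrite eab in neab.
    by move: (c b a bA); rewrite !inE aA sr => /(_ isT) eab; rewrite eab in neab.
  case xA: (x \in A).
    case/properP: pA => _ [y _ yA]; exists y; rewrite inE.
    by apply/negP => /(closed_connect cl); rewrite xA (negbTE yA).
  case/set0Pn: nA => y yA; exists y; rewrite inE.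
  by apply/negP => /(closed_connect cl); rewrite xA yA.
have xC : forall x, x \in C x by move=> x; rewrite inE connect0.
case: (boolP [exists x, #|C x| <= s]).
  move=> /existsP [x cx]; exists (C x); split.
    by rewrite cx andbT; apply/card_gt0P; exists x.
  by move=> x0 y x0C; rewrite inE; apply: F1.
move=> /existsPn big.
have bigs : forall x, s < #|C x| by move=> x; move: (big x); rewrite leqNgt negbK.
exfalso; apply: noS.
have disj : forall x y z, y \notin C x -> z \in C y -> z \notin C x.
  move=> x y z yCx; rewrite !inE => yz; apply/negP => xz; move: yCx.
  by rewrite inE (connect_trans xz) // csR.
case: (boolP [exists x, k < #|C x|]).
  move=> /existsP [x kx].
  have [y yC] := F2 x.
  have [S1 [S1C cS1]] := sub_card kx.
  have [S2 [S2C cS2]] := sub_card (bigs y).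
  have d12 : forall z, z \in S2 -> z \notin S1.
    move=> z zS2; apply/negP => /(subsetP S1C); apply/negP.
    exact: (disj x y z yC (subsetP S2C z zS2)).
  exists (S1 :|: S2); split.
    rewrite cardsU cS1 cS2.
    have -> : S1 :&: S2 = set0.
      apply/setP => z; rewrite !inE; case zS2: (z \in S2); last by rewrite andbF.
      by rewrite (negbTE (d12 z zS2)).
    rewrite cards0; lia.
  move=> z; rewrite inE => /orP [zS1|zS2].
    apply: (leq_trans (subset_leq_card (B := S1 :\ z) _)); last first.
      by move: cS1; rewrite (cardsD1 z) zS1 add1n => -[->].
    apply/subsetP => y0; rewrite !inE => /andP [/orP [y0S1|y0S2] Rzy0].
      rewrite y0S1 andbT; move: Rzy0; rewrite /compl_rel eq_sym => /andP [] //.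
    exfalso.
    have : y0 \in C x by apply: (F3 x z) => //; exact: (subsetP S1C).
    by apply/negP; apply: (disj x y y0 yC (subsetP S2C y0 y0S2)).
  apply: (leq_trans (subset_leq_card (B := S2 :\ z) _)); last first.
    by move: cS2; rewrite (cardsD1 z) zS2 add1n => -[->].
  apply/subsetP => y0; rewrite !inE => /andP [/orP [y0S1|y0S2] Rzy0]; last first.
    rewrite y0S2 andbT; move: Rzy0; rewrite /compl_rel eq_sym => /andP [] //.
  exfalso.
  have zCy : z \in C y by exact: (subsetP S2C).
  have : y0 \in C y by apply: (F3 y z).
  move=> /(disj x y y0 yC); rewrite (subsetP S1C y0 y0S1) //.
move=> /existsPn small.
have [S [_ cS]] : exists S : {set T}, S \subset setT /\ #|S| = k + s + 2 by apply: sub_card; rewrite cardsT.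
exists S; split => // z zS.
apply: (leq_trans (subset_leq_card (B := C z) _)).
  by apply/subsetP => y0; rewrite inE => /andP [_ Rzy0]; apply: (F3 z z) => //.
by move: (small z); rewrite -leqNgt.
Qed.
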